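(* Let $\mathcal C$ and $\mathcal E$ be epireflective subcategories of $\mathbf{Top}$ such that $\mathbf{Top}_0\supseteq\mathcal C\supseteq\mathcal E$, and let $X$ be a topological space. Then $\mathrm{r}_{\mathcal C}X=\mathrm{r}_{\mathcal E}X$ (that is, the canonical continuous map $\mathrm{r}_{(\mathrm{r}_{\mathcal C}X,\mathcal E)}\colon\mathrm{r}_{\mathcal C}X\to\mathrm{r}_{\mathcal E}X$ is a homeomorphism) if and only if every $\mathcal C$-open subset of $X$ is $\mathcal E$-open.
   Context: $\mathbf{Top}_0$ is the class of $T_0$ spaces. An epireflective subcategory $\mathcal C$ of $\mathbf{Top}$ is a full, isomorphism-closed subcategory closed under products and subspaces; each space $X$ has a reflection $\mathrm{r}_{\mathcal C}X\in\mathcal C$ with a continuous surjection $\mathrm{r}_{(X,\mathcal C)}\colon X\to\mathrm{r}_{\mathcal C}X$ through which every continuous map from $X$ into a space of $\mathcal C$ factors uniquely. For a class $\mathcal A$ of spaces, a subset of $X$ is an $\mathcal A$-oset if it equals $f^{-1}(U)$ for some continuous $f\colon X\to Y$ with $Y\in\mathcal A$ and $U$ open in $Y$; the $\mathcal A$-osets form a subbase of a topology on $X$ whose members are called $\mathcal A$-open sets. *)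

(* Defs.v *)
From HB Require Import structures.
From mathcomp Require Import all_boot all_order all_algebra.
From mathcomp Require Import all_classical.
From mathcomp Require Import topology_structure separation_axioms
  function_spaces subtype_topology.
Set Implicit Arguments. Unset Strict Implicit. Unset Printing Implicit Defensive.
Local Open Scope classical_set_scope.

(* A class of topological spaces (a full subcategory of Top). *)
Definition space_class := topologicalType -> Prop.

Definition is_homeomorphism (X Y : topologicalType) (f : X -> Y) : Prop :=
  continuous f /\ exists h : Y -> X, [/\ continuous h, cancel f h & cancel h f].

Definition iso_closed (C : space_class) : Prop :=
  forall (X Y : topologicalType) (f : X -> Y), is_homeomorphism f -> C X -> C Y.

Definition prod_closed (C : space_class) : Prop :=
  forall (I : Type) (T : I -> topologicalType),
    (forall i, C (T i)) -> C (prod_topology T : topologicalType).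

Definition sub_closed (C : space_class) : Prop :=
  forall (X : topologicalType) (A : set X), C X -> C (set_type A : topologicalType).

Definition epireflective (C : space_class) : Prop :=
  [/\ iso_closed C, prod_closed C & sub_closed C].

Definition is_reflection (C : space_class) (X R : topologicalType) (r : X -> R)
  : Prop :=
  [/\ C R, continuous r, (forall y : R, exists x : X, r x = y) &
      forall (Y : topologicalType) (f : X -> Y), C Y -> continuous f ->
        (exists h : R -> Y, continuous h /\ h \o r = f) /\
        (forall h1 h2 : R -> Y, continuous h1 -> continuous h2 ->
            h1 \o r = f -> h2 \o r = f -> h1 = h2)].

Definition oset (A : space_class) (X : topologicalType) (U : set X) : Prop :=
  exists (Y : topologicalType) (f : X -> Y) (V : set Y),
    [/\ A Y, continuous f, open V & U = f @^-1` V].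

(* A-open sets: open in the topology with the A-osets as subbase *)
Definition A_open (A : space_class) (X : topologicalType) (U : set X) : Prop :=
  forall x, U x -> exists (n : nat) (B : 'I_n -> set X),
    [/\ forall i, oset A (B i), forall i, B i x &
        forall y, (forall i, B i y) -> U y].

(* Main.v *)
Require Import Defs.
From HB Require Import structures.
From mathcomp Require Import all_boot all_order all_algebra.
From mathcomp Require Import all_classical.
From mathcomp Require Import topology_structure separation_axioms
  function_spaces subtype_topology.
Local Open Scope classical_set_scope.

Lemma oset_refl (A : space_class) (X R : topologicalType) (r : X -> R)
  (B : set X) : is_reflection A r -> oset A B ->
  exists O : set R, open O /\ B = r @^-1` O.
Proof.
move=> [AR rc rs ru] [Y [f [V [AY fc oV ->]]]].
have [[k [kc kr]] _] := ru Y f AY fc.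
exists (k @^-1` V); split; first by move/continuousP: kc; apply.
by rewrite -kr.
Qed.

Arguments oset_refl {A X R r B}.

Lemma key (C E : space_class) (X RC RE : topologicalType)
  (rC : X -> RC) (rE : X -> RE) :
  is_reflection C rC -> is_reflection E rE ->
  (forall U : set X, A_open C U -> A_open E U) ->
  forall W : set RC, open W ->
  exists O : set RE, open O /\ forall x, W (rC x) <-> O (rE x).
Proof.
move=> hC hE hU W oW.
have : A_open C (rC @^-1` W).
  move=> x Wx; exists 1%N, (fun _ => rC @^-1` W); split => //.
  - move=> _; case: hC => CR rc _ _.
    by exists RC, rC, W; split.
  - by move=> y /(_ ord0).
move/hU => hEo.
pose Q := [set z | forall y, rE y = z -> W (rC y)].
exists (interior Q); split; first exact: open_interior.
move=> x; split.
- move=> /hEo [n [B [Bo Bx BU]]].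
  rewrite /interior /=.
  have : \forall z \near rE x, forall i, (fun i z => forall y, rE y = z -> B i y) i z.
    apply: filter_forall => i.
    have [O [oO BO]] := oset_refl hE (Bo i).
    have Ox : O (rE x) by move: (Bx i); rewrite BO.
    have : nbhs (rE x) O.
      by rewrite nbhsE; exists O => //; split.
    apply: filterS => z Oz y yz; rewrite BO /= yz //.
  apply: filterS => z Hz y yz; apply: BU => i; exact: Hz.
- move=> /interior_subset; exact.
Qed.

Arguments key {C E X RC RE rC rE}.

Theorem theorem6p1 (C E : space_class) :
  epireflective C -> epireflective E ->
  (forall Y : topologicalType, C Y -> kolmogorov_space Y) ->
  (forall Y : topologicalType, E Y -> C Y) ->
  forall (X RC RE : topologicalType) (rC : X -> RC) (rE : X -> RE)
         (g : RC -> RE),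
    is_reflection C rC -> is_reflection E rE ->
    continuous g -> g \o rC = rE ->
    (is_homeomorphism g <-> forall U : set X, A_open C U -> A_open E U).
Proof.
move=> _ _ CT0 EC X RC RE rC rE g hC hE gc grC; split.
- move=> [_ [h [hc gh hg]]] U /[dup] _ hU x Ux.
  have [n [B [Bo Bx BU]]] := hU x Ux.
  exists n, B; split => // i.
  have [O [oO BO]] := oset_refl hC (Bo i).
  case: hE => ERE rEc _ _.
  exists RE, rE, (h @^-1` O); split => //.
    by move/continuousP: hc; apply.
  rewrite BO; apply/funext => y /=.
  by rewrite -grC /= gh.
- move=> hU.
  have K := key hC hE hU.
  case: (hC) => CRC rCc rCs _.
  case: (hE) => ERE rEc rEs _.
  have inj : forall x y, rE x = rE y -> rC x = rC y.
    move=> x y exy; case: (rC x =P rC y) => // /eqP nxy.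
    have [A [[Ax Ay]|[Ay Ax]]] := CT0 _ CRC _ _ nxy.
    + move: Ax Ay; rewrite !inE nbhsE => -[B [oB Bx] BA] Ay; exfalso; apply: Ay.
      have [O [oO HO]] := K B oB.
      by apply: BA; apply/HO; rewrite -exy; apply/HO.
    + move: Ay Ax; rewrite !inE nbhsE => -[B [oB Bx] BA] Ay; exfalso; apply: Ay.
      have [O [oO HO]] := K B oB.
      by apply: BA; apply/HO; rewrite exy; apply/HO.
  have [s sE] := choice rEs.
  split => //; exists (rC \o s); split.
  + apply/continuousP => W oW.
    have [O [oO HO]] := K W oW.
    suff -> : (rC \o s) @^-1` W = O by [].
    apply/funext => z; apply/propext => /=; rewrite HO sE //.
  + move=> a; have [x <-] := rCs a.
    have -> : g (rC x) = rE x by rewrite -grC.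
    by apply: inj; rewrite sE.
  + by move=> z /=; have := congr1 (fun f => f (s z)) grC; rewrite /= sE.
Qed.
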